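(* Let $m\ge7$ and $d\ge2$, and let $J$ be a set of jobs with size vectors $p_j\in\mathbb{R}^d_{\ge0}$ satisfying $p_{j,r}\in[0,1]$ for all $j\in J,r\in[d]$ and $\sum_{j\in J}p_{j,r}\le m\log d$ for all $r\in[d]$. Consider a random job set $S\subseteq J$ in which each job $j\in J$ is independently included with probability $q:=7/m$. Then with probability at least $1/2$, for all $r\in[d]$ we have $\sum_{j\in S}p_{j,r}\le14\log d$ and $\sum_{j\in J\setminus S}p_{j,r}\le(m-1)\log d$. *)

(* Defs.v *)
From HB Require Import structures.
From mathcomp Require Import all_boot all_order all_algebra.
From mathcomp Require Import reals exp.
Set Implicit Arguments. Unset Strict Implicit. Unset Printing Implicit Defensive.
Import Order.TTheory GRing.Theory Num.Theory.
Local Open Scope ring_scope.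

(* Probability that a random subset S of the finite job set T satisfies the
   event E, where each job is included independently with probability q
   (product Bernoulli(q) distribution on subsets):
     P[E] = sum_{S | E S} q^|S| (1-q)^(|T|-|S|). *)
Definition bernoulli_subset_prob (R : realType) (T : finType) (q : R)
  (E : pred {set T}) : R :=
  \sum_(S : {set T} | E S) q ^+ #|S| * (1 - q) ^+ (#|T| - #|S|).

(* Main.v *)
Require Import Defs.
From HB Require Import structures.
From mathcomp Require Import all_boot all_order all_algebra.
From mathcomp Require Import reals exp.
From mathcomp Require Import sequences convex interval_inference ring lra.
Import Order.TTheory GRing.Theory Num.Theory.
Local Open Scope ring_scope.

Lemma sq_le (R : realType) (x a b : R) : 0 <= x -> x <= a -> a * a <= b -> x ^+ 2 <= b.
Proof. move=> x0 xa ab; rewrite expr2; nra. Qed.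

Lemma sq_ge (R : realType) (x a b : R) : 0 <= a -> a <= x -> b <= a * a -> b <= x ^+ 2.
Proof. move=> a0 xa ab; rewrite expr2; nra. Qed.

Lemma expR23 (R : realType) : expR (2/3 : R) <= 461/235.
Proof.
have h1 : expR (1/48 : R) <= 48/47.
  have := expR_ge1Dx (- (1/48 : R)).
  have := expRxMexpNx_1 (1/48 : R).
  have := expR_gt0 (1/48 : R).
  nra.
have E : expR (2/3 : R) = ((((expR (1/48) ^+ 2) ^+ 2) ^+ 2) ^+ 2) ^+ 2.
  by rewrite -!exprM -expRM_natl; congr expR; rewrite !natrM; lra.
rewrite E.
have x0 := expR_ge0 (1/48 : R).
apply: (@sq_le _ _ (923/659)); [exact: exprn_ge0| |lra].
apply: (@sq_le _ _ (716/605)); [exact: exprn_ge0| |lra].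
apply: (@sq_le _ _ (619/569)); [exact: exprn_ge0| |lra].
apply: (@sq_le _ _ (97/93)); [exact: exprn_ge0| |lra].
apply: (@sq_le _ _ (48/47)); [exact: x0| exact: h1 |lra].
Qed.

Lemma expR2 (R : realType) : 7 <= expR (2 : R).
Proof.
have h1 : 33/32 <= expR (1/32 : R).
  by have := expR_ge1Dx (1/32 : R); lra.
have E : expR (2 : R) = (((((expR (1/32) ^+ 2) ^+ 2) ^+ 2) ^+ 2) ^+ 2) ^+ 2.
  by rewrite -!exprM -expRM_natl; congr expR; rewrite !natrM; lra.
rewrite E.
apply: (@sq_ge _ _ (613/229)); [lra| |lra].
apply: (@sq_ge _ _ (589/360)); [lra| |lra].
apply: (@sq_ge _ _ (802/627)); [lra| |lra].
apply: (@sq_ge _ _ (544/481)); [lra| |lra].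
apply: (@sq_ge _ _ (955/898)); [lra| |lra].
apply: (@sq_ge _ _ (33/32)); [lra| exact: h1 |lra].
Qed.

Lemma expR_cvx (R : realType) (t p : R) : 0 <= p -> p <= 1 ->
  expR (p * t) <= 1 + p * (expR t - 1).
Proof.
move=> p0 p1.
have := convex_expR (Itv01 p0 p1) t 0.
rewrite !convRE /= expR0 mulr0 mulr1 addr0 /unstable.onem.
move=> h; apply: (le_trans h); lra.
Qed.

Definition wt {R : realType} {J : finType} (q : R) (S : {set J}) : R :=
  q ^+ #|S| * (1 - q) ^+ (#|J| - #|S|).

Lemma mgf {R : realType} {J : finType} (q : R) (f : J -> R) :
  \sum_(S : {set J}) wt q S * \prod_(j in S) f j = \prod_(j : J) (1 - q + q * f j).
Proof.
rewrite (eq_bigr (fun j => q * f j + (1 - q))); last by move=> j _; rewrite addrC.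
rewrite bigA_distr.
apply: eq_big => // S _.
rewrite [RHS](bigID (mem S)) /=.
rewrite [X in _ = X * _](eq_bigr (fun j => q * f j)); last by move=> j ->.
rewrite [X in _ = _ * X](eq_bigr (fun=> 1 - q)); last by move=> j /negbTE ->.
rewrite big_split /= prodr_const.
rewrite [X in _ = _ * _ * X](eq_bigl (mem (~: S))); last by move=> j; rewrite /= in_setC.
rewrite prodr_const.
have -> : #|~: S| = (#|J| - #|S|)%N by rewrite -(cardsC S) addKn.
rewrite /wt; ring.
Qed.

Lemma wt_ge0 {R : realType} {J : finType} (q : R) (S : {set J}) :
  0 <= q -> q <= 1 -> 0 <= wt q S.
Proof. by move=> q0 q1; rewrite /wt mulr_ge0 // exprn_ge0 // subr_ge0. Qed.

Lemma wt_total {R : realType} {J : finType} (q : R) :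
  \sum_(S : {set J}) wt q S = 1.
Proof.
have := @mgf R J q (fun=> 1).
rewrite mulr1 subrK big1_eq.
under eq_bigr do rewrite big1_eq mulr1.
by [].
Qed.

Lemma union_bound {R : realType} {J : finType} (q : R) (E : pred {set J})
  (g : {set J} -> R) : 0 <= q -> q <= 1 -> (forall S, 0 <= g S) ->
  (forall S, ~~ E S -> 1 <= g S) ->
  1 - \sum_(S : {set J}) wt q S * g S <=
  \sum_(S : {set J} | E S) q ^+ #|S| * (1 - q) ^+ (#|J| - #|S|).
Proof.
move=> q0 q1 g0 gE.
have tot := @wt_total R J q.
rewrite (bigID E) /= in tot; rewrite -/(wt q _) in tot.
have h1 : \sum_(S | ~~ E S) wt q S <= \sum_(S | ~~ E S) wt q S * g S.
  apply: ler_sum => S /gE h; rewrite ler_peMr //; exact: wt_ge0.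
have h2 : 0 <= \sum_(S | E S) wt q S * g S.
  by apply: sumr_ge0 => S _; rewrite mulr_ge0 // wt_ge0.
change (1 - \sum_S wt q S * g S <= \sum_(S | E S) wt q S).
rewrite [X in 1 - X](bigID E) /=; lra.
Qed.

Lemma mgf_bound {R : realType} {J : finType} (q t : R) (a : J -> R) :
  0 <= q -> q <= 1 -> (forall j, 0 <= a j <= 1) ->
  \sum_(S : {set J}) wt q S * expR (t * \sum_(j in S) a j)
    <= expR (q * (expR t - 1) * \sum_j a j).
Proof.
move=> q0 q1 a01.
under eq_bigr do rewrite mulr_sumr expR_sum.
rewrite mgf mulr_sumr expR_sum.
apply: ler_prod => j _; have /andP[a0 a1] := a01 j.
have h := @expR_cvx R t (a j) a0 a1.
have e0 := expR_ge0 (t * a j).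
apply/andP; split; first nra.
apply: le_trans (expR_ge1Dx _).
rewrite mulrC in h.
have : q * expR (t * a j) <= q * (1 + a j * (expR t - 1)) by rewrite ler_wpM2l.
lra.
Qed.

Theorem lemma6 (R : realType) (m d : nat) (J : finType) (p : J -> 'I_d -> R) :
  (7 <= m)%N -> (2 <= d)%N ->
  (forall (j : J) (r : 'I_d), 0 <= p j r <= 1) ->
  (forall r : 'I_d, \sum_(j : J) p j r <= m%:R * ln (d%:R : R)) ->
  (1 / 2 : R) <= bernoulli_subset_prob (7 / m%:R : R)
    (fun S : {set J} =>
       [forall r : 'I_d,
          (\sum_(j in S) p j r <= 14 * ln (d%:R : R)) &&
          (\sum_(j in ~: S) p j r <= (m - 1)%:R * ln (d%:R : R))]).
Proof.
move=> hm hd p01 hT.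
set L := ln (d%:R : R).
set q := (7 / m%:R : R).
have m7 : 7 <= (m%:R : R) by rewrite (ler_nat R 7 m).
have m0 : 0 < (m%:R : R) by lra.
have q0 : 0 <= q by rewrite divr_ge0 // ltW.
have q1 : q <= 1 by rewrite ler_pdivrMr // mul1r.
have mq : m%:R * q = 7 by rewrite /q mulrC divfK // gt_eqF.
have d2 : 2 <= (d%:R : R) by rewrite (ler_nat R 2 d).
have L0 : 0 <= L by apply: ln_ge0; lra.
have dL : expR L = d%:R by rewrite /L lnK // posrE; lra.
have m1 : ((m - 1)%:R : R) = m%:R - 1 by rewrite natrB // (leq_trans _ hm).
set X := fun r (S : {set J}) => \sum_(j in S) p j r.
set T := fun r => \sum_j p j r.
have T0 r : 0 <= T r by apply: sumr_ge0 => j _; case/andP: (p01 j r).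
have hcomp r S : \sum_(j in ~: S) p j r = T r - X r S.
  rewrite /T /X [\sum_j p j r](bigID (mem S)) /=.
  rewrite [LHS](eq_bigl (fun j => j \notin S)); last by move=> j; rewrite in_setC.
  by rewrite addrC addrK.
pose c1 := expR (- (28/3) * L).
pose c2 r := expR (2 * (T r - (m-1)%:R * L)).
pose g S := \sum_r (expR (2/3 * X r S) * c1 + expR (-2 * X r S) * c2 r).
have g0 S : 0 <= g S.
  by apply: sumr_ge0 => r _; rewrite addr_ge0 // mulr_ge0 // expR_ge0.
rewrite /bernoulli_subset_prob.
apply: le_trans (@union_bound R J q _ g q0 q1 g0 _); last first.
  move=> S /forallPn [r]; rewrite negb_and -!ltNge => /orP [h|h].
  - rewrite /g (bigD1 r) //=.
    have hr : 0 <= \sum_(i | i != r) (expR (2/3 * X i S) * c1 + expR (-2 * X i S) * c2 i).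
      by apply: sumr_ge0 => i _; rewrite addr_ge0 // mulr_ge0 // expR_ge0.
    have h2 : 0 <= expR (-2 * X r S) * c2 r by rewrite mulr_ge0 // expR_ge0.
    have h1 : 1 <= expR (2/3 * X r S) * c1.
      rewrite /c1 -expRD; apply: le_trans (expR_ge1Dx _).
      rewrite /X; lra.
    lra.
  - rewrite /g (bigD1 r) //=.
    have hr : 0 <= \sum_(i | i != r) (expR (2/3 * X i S) * c1 + expR (-2 * X i S) * c2 i).
      by apply: sumr_ge0 => i _; rewrite addr_ge0 // mulr_ge0 // expR_ge0.
    have h2 : 0 <= expR (2/3 * X r S) * c1 by rewrite mulr_ge0 // expR_ge0.
    have h1 : 1 <= expR (-2 * X r S) * c2 r.
      rewrite /c2 -expRD; apply: le_trans (expR_ge1Dx _).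
      rewrite hcomp in h; lra.
    lra.
have e23 := @expR23 R.
have e23' : 1 <= expR (2/3 : R) by have := expR_ge1Dx (2/3 : R); lra.
have e2 := @expR2 R.
have u0 := expR_ge0 (-2 : R).
have u7 : expR (-2 : R) <= 1/7.
  have := expRxMexpNx_1 (2 : R); nra.
have key r : \sum_S wt q S * (expR (2/3 * X r S) * c1 + expR (-2 * X r S) * c2 r)
    <= expR (- (5/2) * L) + expR (- 4 * L).
  have -> : \sum_S wt q S * (expR (2/3 * X r S) * c1 + expR (-2 * X r S) * c2 r)
     = c1 * \sum_S wt q S * expR (2/3 * X r S) + c2 r * \sum_S wt q S * expR (-2 * X r S).
    by rewrite !mulr_sumr -big_split /=; apply: eq_bigr => S _; ring.
  have hA : \sum_S wt q S * expR (2/3 * X r S) <= expR (q * (expR (2/3) - 1) * T r)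
    := @mgf_bound R J q (2/3) (fun j => p j r) q0 q1 (fun j => p01 j r).
  have hB : \sum_S wt q S * expR (-2 * X r S) <= expR (q * (expR (-2) - 1) * T r)
    := @mgf_bound R J q (-2) (fun j => p j r) q0 q1 (fun j => p01 j r).
  have c10 : 0 <= c1 by exact: expR_ge0.
  have c20 : 0 <= c2 r by exact: expR_ge0.
  have qT : q * T r <= 7 * L.
    have := ler_wpM2l q0 (hT r); rewrite -/L mulrA [q * m%:R]mulrC mq; exact.
  have eA : c1 * expR (q * (expR (2/3) - 1) * T r) <= expR (- (5/2) * L).
    rewrite /c1 -expRD ler_expR.
    have : (expR (2/3) - 1) * (q * T r) <= (expR (2/3) - 1) * (7 * L).
      by rewrite ler_wpM2l // subr_ge0.
    have : expR (2/3) * L <= 461/235 * L by rewrite ler_wpM2r.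
    lra.
  have eB : c2 r * expR (q * (expR (-2) - 1) * T r) <= expR (- 4 * L).
    rewrite /c2 -expRD ler_expR m1.
    have k0 : 0 <= 2 + q * (expR (-2) - 1) by nra.
    have : (2 + q * (expR (-2) - 1)) * T r <= (2 + q * (expR (-2) - 1)) * (m%:R * L).
      by rewrite ler_wpM2l //; exact: hT.
    have : m%:R * q * (expR (-2) * L) = 7 * (expR (-2) * L) by rewrite mq.
    have : m%:R * q * L = 7 * L by rewrite mq.
    have : expR (-2) * L <= 1/7 * L by rewrite ler_wpM2r.
    lra.
  have := ler_wpM2l c10 hA; have := ler_wpM2l c20 hB; lra.
have hsum : \sum_S wt q S * g S <= d%:R * (expR (- (5/2) * L) + expR (- 4 * L)).
  rewrite /g; under eq_bigr do rewrite mulr_sumr.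
  rewrite exchange_big /=.
  apply: le_trans (ler_sum _ (fun r _ => key r)) _.
  rewrite sumr_const card_ord -mulr_natl; lra.
rewrite -dL mulrDr -!expRD in hsum.
have y0 := expR_ge0 (- (3/2) * L).
have yy : expR (- (3/2) * L) * expR (- (3/2) * L) = expR (L + - 4 * L).
  by rewrite -expRD; congr expR; lra.
have y3 : expR (L + - 4 * L) * expR (3%:R * L) = 1.
  rewrite -expRD -[RHS]expR0; congr expR; lra.
rewrite expRM_natl dL in y3.
have d8 : 8 <= (d%:R : R) ^+ 3.
  rewrite !exprS expr0 mulr1; nra.
rewrite (_ : L + - (5/2) * L = - (3/2) * L) in hsum; last by lra.
have z0 := expR_ge0 (L + -4 * L).
have z8 : expR (L + -4 * L) <= 1/8 by nra.
have y38 : expR (- (3/2) * L) <= 3/8 by nra.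
lra.
Qed.
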